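(* Under the standing assumptions, define for real $z\in[0,n]$ $$\Phi_c(z)=\frac{\Gamma(n+1)}{\Gamma(z+1)\Gamma(n-z+1)}\left(\frac1d\right)^{z}\left(1-\frac1d\right)^{n-z}f\!\left(\frac zn\right)^{rm},$$ where $\Gamma$ is the Gamma function. Then $\Phi_c(\omega)=\Phi(\omega)$ for $\omega=1,2,\dots,n$, and, for all sufficiently large $n$, $\Phi_c'(z)<0$ for all $z\in(n\eta_1,n\eta_2)$.
   Context: Parameters: integer $k\ge2$, constants $\alpha>0$, $r>0$, $0<p<1$; $d=n^{\alpha}$ (treated as an integer), $m=n\ln d$, $\tau=\frac1{1-p}$, $r_{cr}=\frac1{\ln\tau}$. Standing assumptions: $(2k-1)\alpha>1$, $k\alpha\le1$, $k\ge\frac{\tau\ln\tau}{\tau-1}$, and $r<r_{cr}$. Notation: $f(s)=1+\frac{p}{1-p}\cdot\frac{s^k-d^{-k}}{1-d^{-k}}$ for $s\in[0,1]$; $B(S)=\binom{n}{S}\left(\frac1d\right)^{S}\left(1-\frac1d\right)^{n-S}$; $W(S)=f(S/n)^{rm}$; $\Phi(S)=B(S)W(S)$. Let $\lambda>0$ be a fixed constant and $\eta_1=\frac1d+\frac{\lambda}{n^{1-(k-1)\alpha}\ln d}$. Let $\alpha_0=\frac{(2k-1)\alpha-1}{2(k-1)}$, and let $\eta_2,\eta_3,\mu$ be constants with $0<\eta_2<\eta_3<1$, $\alpha_0/\alpha-\mu\eta_2^{k-1}>0$, $\mu>\frac{kpr}{1-p}$, and $r\ln(1-p)+\eta_3>0$.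 *)

(* Defs.v *)
From Stdlib Require Import Reals.
From Coquelicot Require Import Coquelicot.
Open Scope R_scope.

(* Euler's Gamma function: Gamma(x) = int_0^oo t^(x-1) e^(-t) dt (used for x >= 1). *)
Definition Gamma (x : R) : R :=
  RInt_gen (fun t => Rpower t (x - 1) * exp (- t)) (at_right 0) (Rbar_locally p_infty).

Definition dd (alpha : R) (n : nat) : R := Rpower (INR n) alpha.
Definition mm (alpha : R) (n : nat) : R := INR n * ln (dd alpha n).

Definition tau (p : R) : R := 1 / (1 - p).
Definition r_cr (p : R) : R := 1 / ln (tau p).

Definition f (k : nat) (p d s : R) : R :=
  1 + p / (1 - p) * ((s ^ k - / d ^ k) / (1 - / d ^ k)).

Definition B (alpha : R) (n S : nat) : R :=
  Binomial.C n S * (1 / dd alpha n) ^ S * (1 - 1 / dd alpha n) ^ (n - S).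

Definition W (k : nat) (alpha r p : R) (n S : nat) : R :=
  Rpower (f k p (dd alpha n) (INR S / INR n)) (r * mm alpha n).

Definition Phi (k : nat) (alpha r p : R) (n S : nat) : R :=
  B alpha n S * W k alpha r p n S.

Definition Phi_c (k : nat) (alpha r p : R) (n : nat) (z : R) : R :=
  Gamma (INR n + 1) / (Gamma (z + 1) * Gamma (INR n - z + 1))
  * Rpower (1 / dd alpha n) z
  * Rpower (1 - 1 / dd alpha n) (INR n - z)
  * Rpower (f k p (dd alpha n) (z / INR n)) (r * mm alpha n).

Definition eta1 (k : nat) (alpha lambda : R) (n : nat) : R :=
  1 / dd alpha n
  + lambda / (Rpower (INR n) (1 - (INR k - 1) * alpha) * ln (dd alpha n)).

Definition alpha0 (k : nat) (alpha : R) : R :=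
  ((2 * INR k - 1) * alpha - 1) / (2 * (INR k - 1)).

(* Main.v *)
Require Import Defs.
From Stdlib Require Import Reals Lra Lia Arith Factorial.
From Coquelicot Require Import Coquelicot.
Import Defs.
Open Scope R_scope.

Lemma ln_le_sub1 y : 0 < y -> ln y <= y - 1.
Proof. intros Hy. pose proof (exp_ineq1_le (ln y)). rewrite exp_ln in H; lra. Qed.

Definition LI (f : R -> R) := forall a b, 0 < a -> a <= b -> ex_RInt f a b.
Definition IGe (f : R -> R) (l : R) := LI f /\
  forall eps, 0 < eps -> exists del, 0 < del <= 1 /\ exists M, 1 <= M /\
    forall a b, 0 < a < del -> M < b -> Rabs (RInt f a b - l) < eps.

Lemma LI_cont f : (forall t, 0 < t -> continuous f t) -> LI f.
Proof.
  intros H a b Ha Hab. apply (@ex_RInt_continuous R_CompleteNormedModule). intros z Hz.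
  apply H. rewrite Rmin_left in Hz; lra.
Qed.

Lemma LI_plus f g : LI f -> LI g -> LI (fun t => f t + g t).
Proof. intros Hf Hg a b Ha Hab. exact (@ex_RInt_plus R_NormedModule f g a b (Hf a b Ha Hab) (Hg a b Ha Hab)). Qed.
Lemma LI_scal c f : LI f -> LI (fun t => c * f t).
Proof. intros Hf a b Ha Hab. exact (@ex_RInt_scal R_NormedModule f a b c (Hf a b Ha Hab)). Qed.

Lemma RInt_plus' f g a b : ex_RInt f a b -> ex_RInt g a b ->
  RInt (fun t => f t + g t) a b = RInt f a b + RInt g a b.
Proof. intros. exact (@RInt_plus R_CompleteNormedModule f g a b H H0). Qed.
Lemma RInt_scal' c f a b : ex_RInt f a b ->
  RInt (fun t => c * f t) a b = c * RInt f a b.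
Proof. intros. exact (@RInt_scal R_CompleteNormedModule f a b c H). Qed.

Lemma IGe_plus f g lf lg : IGe f lf -> IGe g lg -> IGe (fun t => f t + g t) (lf + lg).
Proof.
  intros [Lf Hf] [Lg Hg]. split. apply LI_plus; auto.
  intros eps He. destruct (Hf (eps/2)) as [d1 [Hd1 [M1 [HM1 H1]]]]; [lra|].
  destruct (Hg (eps/2)) as [d2 [Hd2 [M2 [HM2 H2]]]]; [lra|].
  exists (Rmin d1 d2). split. split. apply Rmin_glb_lt; lra. pose proof (Rmin_l d1 d2); lra.
  exists (Rmax M1 M2). split. pose proof (Rmax_l M1 M2); lra.
  intros a b Ha Hb. pose proof (Rmin_l d1 d2). pose proof (Rmin_r d1 d2).
  pose proof (Rmax_l M1 M2). pose proof (Rmax_r M1 M2).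
  rewrite RInt_plus'. 2,3: (apply Lf || apply Lg); lra.
  specialize (H1 a b ltac:(lra) ltac:(lra)). specialize (H2 a b ltac:(lra) ltac:(lra)).
  revert H1 H2. unfold Rabs. repeat destruct Rcase_abs; lra.
Qed.

Lemma IGe_scal c f l : IGe f l -> IGe (fun t => c * f t) (c * l).
Proof.
  intros [Lf Hf]. split. apply LI_scal; auto.
  intros eps He. destruct (Hf (eps / (Rabs c + 1))) as [d1 [Hd1 [M1 [HM1 H1]]]].
  { apply Rdiv_lt_0_compat; auto. pose proof (Rabs_pos c); lra. }
  exists d1. split; auto. exists M1. split; auto. intros a b Ha Hb.
  rewrite RInt_scal'. 2: apply Lf; lra.
  replace (c * RInt f a b - c * l) with (c * (RInt f a b - l)) by ring.
  rewrite Rabs_mult. specialize (H1 a b Ha Hb).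
  pose proof (Rabs_pos c). pose proof (Rabs_pos (RInt f a b - l)).
  apply Rle_lt_trans with (Rabs c * (eps / (Rabs c + 1))).
  apply Rmult_le_compat_l; lra.
  apply Rlt_le_trans with ((Rabs c + 1) * (eps / (Rabs c + 1))).
  apply Rmult_lt_compat_r. apply Rdiv_lt_0_compat; lra. lra.
  right. field. lra.
Qed.

Lemma IGe_ext f g l : (forall t, 0 < t -> f t = g t) -> IGe f l -> IGe g l.
Proof.
  intros E [Lf Hf]. assert (RE : forall a b, 0 < a -> a <= b -> RInt f a b = RInt g a b).
  { intros a b Ha Hab. apply RInt_ext. intros x Hx. rewrite Rmin_left in Hx by lra. apply E; lra. }
  split.
  - intros a b Ha Hab. apply ex_RInt_ext with f. intros x Hx. rewrite Rmin_left in Hx by lra. apply E; lra. auto.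
  - intros eps He. destruct (Hf eps He) as [d1 [Hd1 [M1 [HM1 H1]]]]. exists d1. split; auto.
    exists M1. split; auto. intros a b Ha Hb. rewrite <- RE by lra. auto.
Qed.

Lemma IGe_le f g lf lg : (forall t, 0 < t -> f t <= g t) -> IGe f lf -> IGe g lg -> lf <= lg.
Proof.
  intros Hle [Lf Hf] [Lg Hg]. destruct (Rle_or_lt lf lg) as [|Hlt]; auto. exfalso.
  set (eps := (lf - lg)/2).
  destruct (Hf eps) as [d1 [Hd1 [M1 [HM1 H1]]]]; [unfold eps; lra|].
  destruct (Hg eps) as [d2 [Hd2 [M2 [HM2 H2]]]]; [unfold eps; lra|].
  set (a := Rmin d1 d2 / 2). set (b := Rmax M1 M2 + 1).
  pose proof (Rmin_l d1 d2). pose proof (Rmin_r d1 d2).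
  pose proof (Rmax_l M1 M2). pose proof (Rmax_r M1 M2).
  assert (0 < Rmin d1 d2) by (apply Rmin_glb_lt; lra).
  specialize (H1 a b ltac:(unfold a; lra) ltac:(unfold b; lra)).
  specialize (H2 a b ltac:(unfold a; lra) ltac:(unfold b; lra)).
  assert (RInt f a b <= RInt g a b).
  { apply RInt_le. unfold a, b; lra. apply Lf; unfold a, b; lra. apply Lg; unfold a, b; lra.
    intros x Hx. apply Hle. unfold a in Hx; lra. }
  revert H1 H2. unfold Rabs, eps. repeat destruct Rcase_abs; lra.
Qed.

Lemma IGe_unique f l1 l2 : IGe f l1 -> IGe f l2 -> l1 = l2.
Proof. intros. apply Rle_antisym; apply (IGe_le f f); auto; intros; lra. Qed.

Lemma IGe_lower h l a b : (forall t, 0 < t -> 0 <= h t) -> IGe h l -> 0 < a -> a <= b -> RInt h a b <= l.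
Proof.
  intros Hp [Lh Hh] Ha Hab. apply Rnot_lt_le. intros Hlt.
  set (eps := (RInt h a b - l)/2).
  destruct (Hh eps) as [d1 [Hd1 [M1 [HM1 H1]]]]; [unfold eps; lra|].
  set (a' := Rmin d1 a / 2). set (b' := Rmax M1 b + 1).
  pose proof (Rmin_l d1 a). pose proof (Rmin_r d1 a). pose proof (Rmax_l M1 b). pose proof (Rmax_r M1 b).
  assert (0 < Rmin d1 a) by (apply Rmin_glb_lt; lra).
  specialize (H1 a' b' ltac:(unfold a'; lra) ltac:(unfold b'; lra)).
  assert (RInt h a b <= RInt h a' b').
  { rewrite <- (RInt_Chasles h a' a b'). rewrite <- (RInt_Chasles h a b b').
    2,3,4,5: apply Lh; unfold a', b'; lra.
    assert (0 <= RInt h a' a). apply RInt_ge_0. unfold a'; lra. apply Lh; unfold a'; lra. intros; apply Hp; unfold a' in *; lra.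
    assert (0 <= RInt h b b'). apply RInt_ge_0. unfold b'; lra. apply Lh; unfold b'; lra. intros; apply Hp; lra.
    unfold plus; simpl. lra. }
  revert H1. unfold Rabs, eps. destruct Rcase_abs; lra.
Qed.

Lemma RInt_mono_dom h a a0 b0 b : LI h -> (forall t, 0 < t -> 0 <= h t) ->
  0 < a -> a <= a0 -> a0 <= b0 -> b0 <= b -> RInt h a0 b0 <= RInt h a b.
Proof.
  intros Lh Hp Ha H1 H2 H3.
  rewrite <- (RInt_Chasles h a a0 b). rewrite <- (RInt_Chasles h a0 b0 b).
  2,3,4,5: apply Lh; lra.
  assert (0 <= RInt h a a0). apply RInt_ge_0. lra. apply Lh; lra. intros; apply Hp; lra.
  assert (0 <= RInt h b0 b). apply RInt_ge_0. lra. apply Lh; lra. intros; apply Hp; lra.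
  unfold plus; simpl. lra.
Qed.

Lemma IGe_exists_nonneg h g lg : LI h -> (forall t, 0 < t -> 0 <= h t <= g t) -> IGe g lg ->
  exists l, IGe h l.
Proof.
  intros Lh Hhg Hg.
  set (E := fun y => exists a b, 0 < a <= b /\ y = RInt h a b).
  assert (Hb : bound E).
  { exists lg. intros y [a [b [Hab ->]]]. apply Rle_trans with (RInt g a b).
    apply RInt_le; try lra. apply Lh; lra. apply (proj1 Hg); lra. intros; apply Hhg; lra.
    apply IGe_lower; auto; try lra. intros t Ht; specialize (Hhg t Ht); lra. }
  assert (Hne : exists y, E y) by (exists (RInt h 1 1), 1, 1; split; [lra|auto]).
  destruct (completeness E Hb Hne) as [l [Hub Hlub]].
  exists l. split; auto. intros eps He.
  assert (exists y, E y /\ l - eps < y) as [y [[a0 [b0 [Hab0 ->]]] Hy]].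
  { apply Classical_Prop.NNPP. intro Hn. assert (l <= l - eps); [|lra].
    apply Hlub. intros y Ey. apply Rnot_lt_le. intro. apply Hn. exists y; split; auto. }
  exists (Rmin a0 1). split. split. apply Rmin_glb_lt; lra. apply Rmin_r.
  exists (Rmax b0 1). split. apply Rmax_r. intros a b Ha Hb2.
  pose proof (Rmin_l a0 1). pose proof (Rmin_r a0 1). pose proof (Rmax_l b0 1). pose proof (Rmax_r b0 1).
  assert (RInt h a0 b0 <= RInt h a b).
  { apply RInt_mono_dom; auto; try lra. intros t Ht; specialize (Hhg t Ht); lra. }
  assert (RInt h a b <= l). { apply Hub. exists a, b; split; auto; lra. }
  unfold Rabs; destruct Rcase_abs; lra.
Qed.

Lemma IGe_exists_dom f g lg : LI f -> (forall t, 0 < t -> Rabs (f t) <= g t) -> IGe g lg ->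
  exists l, IGe f l.
Proof.
  intros Lf Hfg Hg.
  destruct (IGe_exists_nonneg (fun t => f t + g t) (fun t => 2 * g t) (2 * lg)) as [lh Hh].
  - apply LI_plus; auto. apply Hg.
  - intros t Ht. specialize (Hfg t Ht). revert Hfg. unfold Rabs; destruct Rcase_abs; lra.
  - apply IGe_scal; auto.
  - exists (lh + -1 * lg). apply IGe_ext with (fun t => (f t + g t) + -1 * g t).
    intros; ring. apply IGe_plus; auto. apply IGe_scal; auto.
Qed.

Lemma IGe_to_gen f l : IGe f l -> is_RInt_gen f (at_right 0) (Rbar_locally p_infty) l.
Proof.
  intros [Lf Hf]. unfold is_RInt_gen, filterlimi, filter_le, filtermapi.
  intros P [eps HP].
  destruct (Hf eps (cond_pos eps)) as [d [Hd [M [HM H]]]].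
  apply Filter_prod with (fun a => 0 < a < d) (fun b => M < b).
  - exists (mkposreal d ltac:(lra)). intros y Hy Hy0. split; auto.
    unfold ball in Hy; simpl in Hy; unfold AbsRing_ball, abs, minus, plus, opp in Hy; simpl in Hy.
    revert Hy. unfold Rabs; destruct Rcase_abs; lra.
  - exists M. auto.
  - intros a b Ha Hb. exists (RInt f a b). split.
    + simpl. apply (@RInt_correct R_CompleteNormedModule). apply Lf; lra.
    + apply HP. unfold ball; simpl; unfold AbsRing_ball, abs, minus, plus, opp; simpl.
      change (Rabs (RInt f a b - l) < eps). apply H; simpl; lra.
Qed.

Lemma IGe_RInt_gen f l : IGe f l -> RInt_gen f (at_right 0) (Rbar_locally p_infty) = l.
Proof. intros H. apply is_RInt_gen_unique. apply IGe_to_gen; auto. Qed.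

Lemma exp_le x y : x <= y -> exp x <= exp y.
Proof. intros H. destruct (Rle_lt_or_eq_dec _ _ H). left; apply exp_increasing; auto. subst; lra. Qed.

Lemma Rpower_pos t c : 0 < Rpower t c.
Proof. unfold Rpower; apply exp_pos. Qed.

Lemma Rpower_mono_ge1 t a b : 1 <= t -> a <= b -> Rpower t a <= Rpower t b.
Proof. intros. apply Rle_Rpower; auto. Qed.

Lemma Rpower_mono_le1 t a b : 0 < t <= 1 -> a <= b -> Rpower t b <= Rpower t a.
Proof.
  intros Ht Hab. unfold Rpower. destruct (Rle_lt_or_eq_dec _ _ (proj2 Ht)) as [H|H].
  - assert (ln t < 0). { rewrite <- ln_1. apply ln_increasing; lra. }
    apply exp_le. nra.
  - subst. rewrite ln_1. rewrite !Rmult_0_r. lra.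
Qed.

Lemma Rpower_sandwich t a e b : 0 < t -> a <= e <= b -> Rpower t e <= Rpower t a + Rpower t b.
Proof.
  intros Ht He. pose proof (Rpower_pos t a). pose proof (Rpower_pos t b).
  destruct (Rle_or_lt t 1).
  - pose proof (Rpower_mono_le1 t a e ltac:(lra) ltac:(lra)). lra.
  - pose proof (Rpower_mono_ge1 t e b ltac:(lra) ltac:(lra)). lra.
Qed.

Lemma Rpower_le1 t c : 0 < t <= 1 -> 0 <= c -> Rpower t c <= 1.
Proof. intros. rewrite <- (Rpower_O t) by lra. apply Rpower_mono_le1; lra. Qed.

Lemma is_derive_Rpower_t t c : 0 < t -> is_derive (fun u => Rpower u c) t (c * Rpower t (c - 1)).
Proof. intros. apply is_derive_Reals. apply derivable_pt_lim_power; auto. Qed.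

Lemma continuous_Rpower_t t c : 0 < t -> continuous (fun u => Rpower u c) t.
Proof. intros. apply (@ex_derive_continuous R_AbsRing R_NormedModule). eexists. apply is_derive_Rpower_t; auto. Qed.

Lemma continuous_ln' t : 0 < t -> continuous ln t.
Proof. intros. apply (@ex_derive_continuous R_AbsRing R_NormedModule). eexists. apply is_derive_Reals. apply derivable_pt_lim_ln; auto. Qed.

Lemma continuous_expm t : continuous (fun u => exp (- u)) t.
Proof. apply (@ex_derive_continuous R_AbsRing R_NormedModule). auto_derive; auto. Qed.

Lemma pow_bound c : 0 <= c -> exists K, 0 < K /\ forall t, 0 < t -> Rpower t c <= K * exp (t/2).
Proof.
  intros Hc. destruct (Rle_lt_or_eq_dec _ _ Hc) as [Hc'|Hc'].
  - exists (exp (c * ln (2*c) - c)). split. apply exp_pos. intros t Ht.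
    rewrite <- exp_plus. unfold Rpower. apply exp_le.
    assert (ln t <= ln (2*c) + t/(2*c) - 1).
    { pose proof (ln_le_sub1 (t/(2*c)) ltac:(apply Rdiv_lt_0_compat; lra)).
      rewrite ln_div in H by lra. lra. }
    apply Rle_trans with (c * (ln (2*c) + t/(2*c) - 1)). apply Rmult_le_compat_l; lra.
    right. field. lra.
  - subst. exists 1. split. lra. intros t Ht. rewrite Rpower_O by auto.
    pose proof (exp_ineq1_le (t/2)). lra.
Qed.

Lemma cont_mult (f g : R -> R) t : continuous f t -> continuous g t -> continuous (fun u => f u * g u) t.
Proof. intros. exact (@continuous_mult R_UniformSpace R_AbsRing f g t H H0). Qed.
Lemma cont_plus (f g : R -> R) t : continuous f t -> continuous g t -> continuous (fun u => f u + g u) t.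
Proof. intros. exact (@continuous_plus R_UniformSpace R_AbsRing R_NormedModule f g t H H0). Qed.
Lemma cont_const (c t : R) : continuous (fun _ => c) t.
Proof. exact (@continuous_const R_UniformSpace R_UniformSpace c t). Qed.

Lemma RInt_expq q a b : 0 < q -> RInt (fun t => exp (- (q * t))) a b = (exp (-(q*a)) - exp (-(q*b))) / q.
Proof.
  intros Hq. apply is_RInt_unique.
  replace ((exp (-(q*a)) - exp (-(q*b))) / q) with (minus (- exp (-(q*b))/q) (- exp (-(q*a))/q)).
  2: { unfold minus, plus, opp; simpl. field. lra. }
  apply (@is_RInt_derive R_CompleteNormedModule (fun t => - exp (-(q*t))/q)).
  - intros x _. auto_derive; auto. field. lra.
  - intros x _. apply (@ex_derive_continuous R_AbsRing R_NormedModule). auto_derive; auto.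
Qed.

Lemma IGe_expq q : 0 < q -> IGe (fun t => exp (- (q * t))) (1/q).
Proof.
  intros Hq. split.
  { apply LI_cont. intros t _. apply (@ex_derive_continuous R_AbsRing R_NormedModule). auto_derive; auto. }
  intros eps He. exists (Rmin 1 (eps/2)). split. split. apply Rmin_glb_lt; lra. apply Rmin_l.
  exists (Rmax 1 (2/(q*q*eps))). split. apply Rmax_l. intros a b Ha Hb.
  pose proof (Rmin_l 1 (eps/2)). pose proof (Rmin_r 1 (eps/2)).
  pose proof (Rmax_l 1 (2/(q*q*eps))). pose proof (Rmax_r 1 (2/(q*q*eps))).
  rewrite RInt_expq by auto.
  assert (E1 : 1 - q * a <= exp (-(q*a))) by (pose proof (exp_ineq1_le (-(q*a))); lra).
  assert (E2 : exp (-(q*a)) <= 1).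
  { rewrite <- exp_0. apply exp_le. nra. }
  assert (E3 : 0 < exp (-(q*b))) by apply exp_pos.
  assert (E4 : exp (-(q*b)) * (1 + q*b) <= 1).
  { pose proof (exp_ineq1_le (q*b)). assert (exp (-(q*b)) * exp (q*b) = 1).
    rewrite <- exp_plus. replace (-(q*b) + q*b) with 0 by ring. apply exp_0. nra. }
  assert (Hqb : 2/(q*eps) < q*b).
  { apply Rle_lt_trans with (q * (2/(q*q*eps))). right. field. repeat split; lra.
    apply Rmult_lt_compat_l; lra. }
  assert (Hb' : exp (-(q*b)) < q*eps/2).
  { assert (0 < 2/(q*eps)) by (apply Rdiv_lt_0_compat; nra).
    assert (exp (-(q*b)) * (2/(q*eps)) < 1). 
    { apply Rle_lt_trans with (exp (-(q*b)) * (q*b)). apply Rmult_le_compat_l; lra. nra. }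
    apply Rmult_lt_reg_r with (2/(q*eps)); auto. replace (q*eps/2 * (2/(q*eps))) with 1 by (field; lra). auto. }
  replace ((exp (- (q * a)) - exp (- (q * b))) / q - 1 / q) with (((exp (- (q * a)) - 1) - exp (- (q * b))) / q) by (field; lra).
  rewrite Rabs_div by lra. rewrite (Rabs_right q) by lra.
  apply Rmult_lt_reg_r with q; auto. unfold Rdiv. rewrite Rmult_assoc, Rinv_l, Rmult_1_r by lra.
  unfold Rabs; destruct Rcase_abs; nra.
Qed.

Definition gi (c t : R) := Rpower t c * exp (- t).

Lemma gi_pos c t : 0 < gi c t.
Proof. unfold gi. apply Rmult_lt_0_compat. apply Rpower_pos. apply exp_pos. Qed.

Lemma gi_cont c t : 0 < t -> continuous (gi c) t.
Proof.
  intros Ht. unfold gi. apply (cont_mult (fun u => Rpower u c) (fun u => exp (- u))).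
  apply continuous_Rpower_t; auto. apply continuous_expm.
Qed.

Lemma LI_gi c : LI (gi c).
Proof. apply LI_cont. intros; apply gi_cont; auto. Qed.

Lemma IGe_gi_ex c : 0 <= c -> exists l, IGe (gi c) l.
Proof.
  intros Hc. destruct (pow_bound c Hc) as [K [HK HB]].
  apply IGe_exists_dom with (fun t => K * exp (- ((1/2) * t))) (K * (1/(1/2))).
  apply LI_gi.
  - intros t Ht. rewrite Rabs_right by (left; apply gi_pos). unfold gi.
    replace (exp (- ((1/2) * t))) with (exp (t/2) * exp (-t)).
    rewrite <- Rmult_assoc. apply Rmult_le_compat_r. left; apply exp_pos. auto.
    rewrite <- exp_plus. f_equal. field.
  - apply IGe_scal. apply IGe_expq. lra.
Qed.

Lemma Gamma_IGe x : 1 <= x -> IGe (gi (x-1)) (Gamma x).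
Proof.
  intros Hx. destruct (IGe_gi_ex (x-1)) as [l Hl]. lra.
  unfold Gamma. change (fun t => Rpower t (x - 1) * exp (- t)) with (gi (x-1)).
  rewrite (IGe_RInt_gen _ l Hl). auto.
Qed.

Lemma Gamma_1 : Gamma 1 = 1.
Proof.
  apply (IGe_unique (gi (1-1))). apply Gamma_IGe; lra.
  assert (H : IGe (fun t => exp (- (1 * t))) (1/1)) by (apply IGe_expq; lra).
  replace (1/1) with 1 in H by field.
  apply IGe_ext with (fun t => exp (- (1 * t))). intros t Ht. unfold gi.
  replace (1-1) with 0 by ring. rewrite Rpower_O by auto. rewrite !Rmult_1_l. auto. auto.
Qed.

Lemma Rpower_1' t : 0 < t -> Rpower t 1 = t.
Proof. intros. unfold Rpower. rewrite Rmult_1_l. apply exp_ln; auto. Qed.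

Lemma Gamma_rec x : 1 <= x -> Gamma (x + 1) = x * Gamma x.
Proof.
  intros Hx.
  set (H := fun t => - (Rpower t x * exp (- t))).
  set (df := fun t => gi x t + (-x) * gi (x-1) t).
  assert (Hd : forall t, 0 < t -> is_derive H t (df t)).
  { intros t Ht. unfold H, df, gi.
    apply is_derive_ext with (fun u => - (Rpower u x * exp (- u))). intros; auto.
    evar (l : R). replace (Rpower t x * exp (- t) + - x * (Rpower t (x - 1) * exp (- t))) with l.
    apply (@is_derive_opp R_AbsRing R_NormedModule).
    apply (is_derive_mult (fun u => Rpower u x) (fun u => exp (- u))).
    apply is_derive_Rpower_t; auto. auto_derive; auto. intros; apply Rmult_comm.
    unfold l. unfold plus, mult, opp; simpl. ring. }
  assert (LIdf : LI df). { apply LI_plus. apply LI_gi. apply LI_scal. apply LI_gi. }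
  assert (HI : IGe df 0).
  { split; auto. destruct (pow_bound x ltac:(lra)) as [K [HK HB]].
    intros eps He. exists (Rmin 1 (eps/2)). split. split. apply Rmin_glb_lt; lra. apply Rmin_l.
    exists (Rmax 1 (4*K/eps)). split. apply Rmax_l. intros a b Ha Hb.
    pose proof (Rmin_l 1 (eps/2)). pose proof (Rmin_r 1 (eps/2)).
    pose proof (Rmax_l 1 (4*K/eps)). pose proof (Rmax_r 1 (4*K/eps)).
    assert (RInt df a b = H b - H a).
    { apply is_RInt_unique. apply (@is_RInt_derive R_CompleteNormedModule H df).
      - intros t Ht. rewrite Rmin_left in Ht by lra. apply Hd. lra.
      - intros t Ht. rewrite Rmin_left in Ht by lra. unfold df.
        apply cont_plus. apply gi_cont; lra. apply cont_mult. apply cont_const. apply gi_cont; lra. }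
    rewrite H4. unfold H.
    assert (A1 : 0 < Rpower a x * exp (-a)) by (apply Rmult_lt_0_compat; [apply Rpower_pos|apply exp_pos]).
    assert (A2 : Rpower a x * exp (-a) <= a).
    { apply Rle_trans with (Rpower a x). rewrite <- Rmult_1_r. apply Rmult_le_compat_l.
      left; apply Rpower_pos. rewrite <- exp_0. apply exp_le. lra.
      rewrite <- (Rpower_1' a) at 2 by lra. apply Rpower_mono_le1; lra. }
    assert (B1 : 0 < Rpower b x * exp (-b)) by (apply Rmult_lt_0_compat; [apply Rpower_pos|apply exp_pos]).
    assert (B2 : Rpower b x * exp (-b) <= K * exp (-(b/2))).
    { apply Rle_trans with (K * exp (b/2) * exp (-b)). apply Rmult_le_compat_r. left; apply exp_pos.
      apply HB; lra. rewrite Rmult_assoc, <- exp_plus. right. do 2 f_equal. field. }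
    assert (B3 : exp (-(b/2)) * (1 + b/2) <= 1).
    { pose proof (exp_ineq1_le (b/2)). assert (exp (-(b/2)) * exp (b/2) = 1).
      rewrite <- exp_plus. replace (-(b/2) + b/2) with 0 by ring. apply exp_0.
      pose proof (exp_pos (-(b/2))). nra. }
    assert (B4 : K * exp (-(b/2)) < eps/2).
    { assert (4*K/eps < b) by lra.
      assert (4*K < b * eps). { apply Rmult_lt_reg_r with (/eps). apply Rinv_0_lt_compat; lra.
        replace (b*eps*/eps) with b by (field; lra). auto. }
      pose proof (exp_pos (-(b/2))). nra. }
    unfold Rabs; destruct Rcase_abs; lra. }
  assert (HI2 : IGe df (Gamma (x+1) + (-x) * Gamma x)).
  { apply IGe_plus. replace x with (x + 1 - 1) at 1 by ring. apply Gamma_IGe; lra.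
    apply IGe_scal. apply Gamma_IGe; lra. }
  pose proof (IGe_unique _ _ _ HI HI2). lra.
Qed.

Lemma Gamma_pos x : 1 <= x -> 0 < Gamma x.
Proof.
  intros Hx. pose proof (Gamma_IGe x Hx).
  apply Rlt_le_trans with (RInt (gi (x-1)) 1 2).
  2: { apply IGe_lower; auto; try lra. intros; left; apply gi_pos. }
  apply Rlt_le_trans with (RInt (fun _ => exp (-2)) 1 2).
  { rewrite RInt_const. unfold scal; simpl; unfold mult; simpl. pose proof (exp_pos (-2)). lra. }
  apply RInt_le. lra. apply ex_RInt_const. apply LI_gi; lra.
  intros t Ht. unfold gi. rewrite <- (Rmult_1_l (exp (-2))). apply Rmult_le_compat.
  lra. left; apply exp_pos. apply Rle_trans with (Rpower t 0). rewrite Rpower_O; lra. apply Rpower_mono_ge1; lra.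
  apply exp_le. lra.
Qed.

Lemma Gamma_nat m : Gamma (INR m + 1) = INR (fact m).
Proof.
  induction m.
  - simpl. rewrite Rplus_0_l. apply Gamma_1.
  - rewrite S_INR. rewrite Gamma_rec. rewrite IHm. rewrite fact_simpl, mult_INR, S_INR. ring.
    pose proof (pos_INR m). lra.
Qed.

Lemma dd_gt1 alpha n : 0 < alpha -> (2 <= n)%nat -> 1 < dd alpha n.
Proof.
  intros Ha Hn. unfold dd. assert (1 < INR n). { apply (lt_INR 1 n) in Hn. simpl in Hn. lra. }
  rewrite <- (Rpower_O (INR n)) by lra. apply Rpower_lt; lra.
Qed.

Lemma part1 (k : nat) (alpha r p : R) : 0 < alpha ->
  forall (n w : nat), (2 <= n)%nat -> (1 <= w <= n)%nat ->
     Phi_c k alpha r p n (INR w) = Phi k alpha r p n w.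
Proof.
  intros Ha n w Hn Hw. pose proof (dd_gt1 alpha n Ha Hn) as Hd.
  unfold Phi_c, Phi, B, W.
  rewrite <- minus_INR by lia.
  rewrite !Gamma_nat. rewrite !Rpower_pow.
  2: { apply Rgt_lt. apply Rgt_minus. apply Rlt_gt. unfold Rdiv. rewrite Rmult_1_l. rewrite <- Rinv_1. apply Rinv_lt_contravar; lra. }
  2: { apply Rdiv_lt_0_compat; lra. }
  unfold Binomial.C. reflexivity.
Qed.

Definition gl (c t : R) := Rpower t c * ln t * exp (- t).

Lemma ln_abs_bound t w : 0 < t -> 0 < w -> Rabs (ln t) <= (Rpower t w + Rpower t (-w)) / w.
Proof.
  intros Ht Hw.
  assert (H1 : w * ln t <= Rpower t w).
  { pose proof (ln_le_sub1 (Rpower t w) (Rpower_pos _ _)). rewrite ln_Rpower in H. lra. }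
  assert (H2 : - w * ln t <= Rpower t (-w)).
  { pose proof (ln_le_sub1 (Rpower t (-w)) (Rpower_pos _ _)). rewrite ln_Rpower in H. lra. }
  pose proof (Rpower_pos t w). pose proof (Rpower_pos t (-w)).
  apply Rmult_le_reg_r with w; auto. unfold Rdiv. rewrite Rmult_assoc, Rinv_l, Rmult_1_r by lra.
  unfold Rabs; destruct Rcase_abs; nra.
Qed.

Lemma gl_cont c t : 0 < t -> continuous (gl c) t.
Proof.
  intros Ht. unfold gl. apply cont_mult. apply cont_mult.
  apply continuous_Rpower_t; auto. apply continuous_ln'; auto. apply continuous_expm.
Qed.

Lemma LI_gl c : LI (gl c).
Proof. apply LI_cont. intros; apply gl_cont; auto. Qed.

Lemma IGe_gl_ex c : 0 < c -> exists l, IGe (gl c) l.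
Proof.
  intros Hc. destruct (IGe_gi_ex (c + c/2)) as [l1 H1]. lra.
  destruct (IGe_gi_ex (c - c/2)) as [l2 H2]. lra.
  apply IGe_exists_dom with (fun t => (/(c/2)) * (gi (c + c/2) t + gi (c - c/2) t)) (/(c/2) * (l1 + l2)).
  apply LI_gl.
  - intros t Ht. unfold gl, gi. rewrite !Rpower_plus. unfold Rminus. rewrite Rpower_plus.
    pose proof (ln_abs_bound t (c/2) Ht ltac:(lra)).
    pose proof (Rpower_pos t c). pose proof (exp_pos (-t)).
    rewrite !Rabs_mult. rewrite (Rabs_right (Rpower t c)) by lra. rewrite (Rabs_right (exp (-t))) by lra.
    pose proof (Rabs_pos (ln t)).
    apply Rle_trans with (Rpower t c * ((Rpower t (c / 2) + Rpower t (- (c / 2))) / (c / 2)) * exp (- t)).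
    apply Rmult_le_compat_r. lra. apply Rmult_le_compat_l; lra.
    right. field. lra.
  - apply IGe_scal. apply IGe_plus; auto.
Qed.

Definition Gamma1 (x : R) : R :=
  RInt_gen (gl (x - 1)) (at_right 0) (Rbar_locally p_infty).

Lemma Gamma1_IGe x : 1 < x -> IGe (gl (x-1)) (Gamma1 x).
Proof.
  intros Hx. destruct (IGe_gl_ex (x-1)) as [l Hl]. lra.
  unfold Gamma1. rewrite (IGe_RInt_gen _ l Hl). auto.
Qed.

Lemma taylor_exp y : Rabs (exp y - 1 - y) <= y * y * exp (Rabs y).
Proof.
  pose proof (exp_ineq1_le y). rewrite Rabs_right by lra.
  destruct (Rle_or_lt (-1) y) as [Hy|Hy].
  - pose proof (exp_ineq1_le (-y)). pose proof (exp_pos y).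
    assert (exp y * exp (-y) = 1). { rewrite <- exp_plus. replace (y + -y) with 0 by ring. apply exp_0. }
    assert (exp y <= exp (Rabs y)). { apply exp_le. apply Rle_abs. }
    assert (exp (-y) * (1 + y) >= (1 - y) * (1 + y)) by nra.
    assert (exp y - 1 - y <= y * y * exp y) by nra. nra.
  - assert (exp y <= 1). { rewrite <- exp_0. apply exp_le. lra. }
    assert (1 <= exp (Rabs y)). { rewrite <- exp_0. apply exp_le. apply Rabs_pos. }
    nra.
Qed.

Lemma exp_4 u : exp (4 * u) = exp u ^ 4.
Proof.
  replace (4 * u) with (u + (u + (u + u))) by ring. rewrite !exp_plus. simpl. ring.
Qed.

Lemma remainder_bound x h t : 1 < x -> Rabs h <= (x-1)/4 -> 0 < t ->
  Rabs (gi (x + h - 1) t - gi (x - 1) t - h * gl (x - 1) t) <=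
  h * h * ((8 / (((x-1)/4) * ((x-1)/4))) * (gi ((x-1)/4) t + gi (7 * ((x-1)/4)) t)).
Proof.
  intros Hx Hh Ht. set (w := (x-1)/4). assert (Hw : 0 < w) by (unfold w; lra).
  set (a := Rpower t w). assert (Ha : 0 < a) by apply Rpower_pos.
  assert (Ex : Rpower t (x-1) = a ^ 4).
  { unfold a, Rpower. rewrite <- exp_4. f_equal. unfold w. field. }
  assert (E7 : Rpower t (7 * w) = a ^ 7).
  { unfold a, Rpower. replace (7 * w * ln t) with (w * ln t + (w * ln t + (w * ln t + (w * ln t + (w * ln t + (w * ln t + w * ln t)))))) by ring.
    rewrite !exp_plus. simpl. ring. }
  assert (Em : Rpower t (-w) = / a). { unfold a. apply Rpower_Ropp. }
  set (y := h * ln t).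
  assert (Eg : gi (x + h - 1) t - gi (x - 1) t - h * gl (x - 1) t = a^4 * exp (-t) * (exp y - 1 - y)).
  { unfold gi, gl, y. replace (x + h - 1) with ((x-1) + h) by ring. rewrite Rpower_plus, Ex.
    unfold Rpower at 1. ring_simplify. replace (ln t * h) with (h * ln t) by ring. ring. }
  rewrite Eg. unfold gi. fold w. fold a. rewrite E7.
  pose proof (taylor_exp y). pose proof (exp_pos (-t)).
  pose proof (ln_abs_bound t w Ht Hw). rewrite Em in H1. fold a in H1.
  assert (Hey : exp (Rabs y) <= a + / a).
  { unfold y. rewrite Rabs_mult.
    apply Rle_trans with (exp (w * Rabs (ln t))). apply exp_le. apply Rmult_le_compat_r. apply Rabs_pos. fold w in Hh. auto.
    unfold a, Rpower. rewrite <- (exp_Ropp (w * ln t)). unfold Rabs. destruct Rcase_abs.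
    replace (w * - ln t) with (- (w * ln t)) by ring. pose proof (exp_pos (w * ln t)). lra.
    pose proof (exp_pos (- (w * ln t))). lra. }
  assert (Hyy : y * y <= h * h * ((a + / a) / w) * ((a + / a) / w)).
  { unfold y.
  assert (Hl2 : ln t * ln t <= ((a + / a) / w) * ((a + / a) / w)).
    { assert (ln t * ln t = Rabs (ln t) * Rabs (ln t)). { rewrite <- Rabs_mult. rewrite Rabs_right. auto. nra. }
      rewrite H2. pose proof (Rabs_pos (ln t)). apply Rmult_le_compat; auto. }
    replace (h * ln t * (h * ln t)) with ((h * h) * (ln t * ln t)) by ring.
    assert (0 <= h * h) by nra.
    pose proof (Rmult_le_compat_l (h*h) _ _ H2 Hl2). lra. }
  assert (Hia : 0 < / a) by (apply Rinv_0_lt_compat; auto).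
  assert (Hpoly : a ^ 4 * ((a + / a) * (a + / a) * (a + / a)) <= 8 * (a + a ^ 7)).
  { assert (a * / a = 1) by (field; lra).
    replace (a ^ 4 * ((a + / a) * (a + / a) * (a + / a))) with (a^7 + 3 * a^5 + 3*a^3 + a).
    2: { field. lra. }
    assert (a^5 <= a + a^7). { destruct (Rle_or_lt a 1). assert (a^5 <= a). 
      { replace (a^5) with (a * a^4) by ring. assert (a^4 <= 1). { assert (a*a <= 1) by nra. replace (a^4) with ((a*a)*(a*a)) by ring. nra. }
        nra. } pose proof (pow_lt a 7 Ha). lra.
      assert (a^5 <= a^7). { replace (a^7) with (a^5 * (a*a)) by ring. pose proof (pow_lt a 5 Ha). assert (1 <= a*a) by nra.
        pose proof (Rmult_le_compat_l (a^5) _ _ (Rlt_le _ _ H4) H5). lra. } lra. }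
    assert (a^3 <= a + a^7). { destruct (Rle_or_lt a 1). assert (a^3 <= a).
      { replace (a^3) with (a * (a*a)) by ring. nra. } pose proof (pow_lt a 7 Ha). lra.
      assert (a^3 <= a^7). { replace (a^7) with (a^3 * (a*a*a*a)) by ring. pose proof (pow_lt a 3 Ha). assert (1 <= a*a*a*a). { assert (1 <= a*a) by nra. nra. }
        pose proof (Rmult_le_compat_l (a^3) _ _ (Rlt_le _ _ H5) H6). lra. } lra. }
    pose proof (pow_lt a 7 Ha). lra. }
  rewrite Rabs_mult, Rabs_right by (pose proof (pow_lt a 4 Ha); nra).
  replace (a * 1) with a in * by ring.
  apply Rle_trans with (a ^ 4 * exp (- t) * (y * y * exp (Rabs y))).
  { apply Rmult_le_compat_l; auto. pose proof (pow_lt a 4 Ha); nra. }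
  apply Rle_trans with (a ^ 4 * exp (- t) * ((h * h * ((a + / a) / w) * ((a + / a) / w)) * (a + / a))).
  { apply Rmult_le_compat_l. pose proof (pow_lt a 4 Ha); nra. apply Rmult_le_compat; try nra. left; apply exp_pos. }
  assert (0 < w * w) by nra.
  replace (a ^ 4 * exp (- t) * (h * h * ((a + / a) / w) * ((a + / a) / w) * (a + / a))) with
    (h * h * exp (-t) / (w*w) * (a ^ 4 * ((a + / a) * (a + / a) * (a + / a)))) by (field; lra).
  replace (h * h * (8 / (w * w) * (a * exp (- t) + a ^ 7 * exp (- t)))) with
    (h * h * exp (-t) / (w*w) * (8 * (a + a^7))) by (field; lra).
  apply Rmult_le_compat_l; auto. apply Rmult_le_pos. apply Rmult_le_pos. nra. lra. left; apply Rinv_0_lt_compat; auto.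
Qed.

Lemma Gamma_derive x : 1 < x -> is_derive Gamma x (Gamma1 x).
Proof.
  intros Hx. set (w := (x-1)/4). assert (Hw : 0 < w) by (unfold w; lra).
  set (Kf := fun t => (8 / (w * w)) * (gi w t + gi (7 * w) t)).
  destruct (IGe_gi_ex w) as [l1 H1]. lra. destruct (IGe_gi_ex (7*w)) as [l2 H2]. lra.
  set (IK := 8 / (w*w) * (l1 + l2)).
  assert (HK : IGe Kf IK) by (apply IGe_scal; apply IGe_plus; auto).
  assert (HIK : 0 <= IK).
  { apply (IGe_le (fun _ => 0) Kf 0 IK). intros t Ht. unfold Kf. pose proof (gi_pos w t). pose proof (gi_pos (7*w) t).
    apply Rmult_le_pos. apply Rmult_le_pos. lra. left; apply Rinv_0_lt_compat; nra. lra.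
    split. apply LI_cont; intros; apply cont_const. intros eps He. exists 1. split. lra. exists 1. split. lra.
    intros. rewrite RInt_const. unfold scal; simpl; unfold mult; simpl. rewrite Rmult_0_r, Rminus_0_r, Rabs_R0. auto.
    auto. }
  apply is_derive_Reals. intros eps He.
  exists (mkposreal (Rmin w (eps / (IK + 1))) ltac:(apply Rmin_glb_lt; [lra | apply Rdiv_lt_0_compat; lra])).
  intros h Hh0 Hh. simpl in Hh.
  pose proof (Rmin_l w (eps / (IK + 1))). pose proof (Rmin_r w (eps / (IK + 1))).
  assert (Hhw : Rabs h <= (x-1)/4) by (fold w; lra).
  set (Rh := fun t => gi (x + h - 1) t + (-1) * gi (x - 1) t + (- h) * gl (x - 1) t).
  assert (HR : IGe Rh (Gamma (x+h) + (-1) * Gamma x + (-h) * Gamma1 x)).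
  { apply IGe_plus. apply IGe_plus. apply Gamma_IGe. pose proof (Rle_abs (-h)) as Hab. rewrite Rabs_Ropp in Hab. lra.
    apply IGe_scal. apply Gamma_IGe; lra. apply IGe_scal. apply Gamma1_IGe; lra. }
  assert (Hb : forall t, 0 < t -> Rabs (Rh t) <= h * h * Kf t).
  { intros t Ht. unfold Rh, Kf. replace (gi (x + h - 1) t + -1 * gi (x - 1) t + - h * gl (x - 1) t)
      with (gi (x + h - 1) t - gi (x - 1) t - h * gl (x - 1) t) by ring.
    unfold w. apply remainder_bound; auto. }
  assert (HHK : IGe (fun t => h * h * Kf t) (h * h * IK)) by (apply IGe_scal; auto).
  assert (Hup : Gamma (x+h) + (-1) * Gamma x + (-h) * Gamma1 x <= h * h * IK).
  { apply (IGe_le Rh (fun t => h * h * Kf t)); auto. intros t Ht. specialize (Hb t Ht). revert Hb. unfold Rabs; destruct Rcase_abs; lra. }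
  assert (Hlo : -1 * (Gamma (x+h) + (-1) * Gamma x + (-h) * Gamma1 x) <= h * h * IK).
  { apply (IGe_le (fun t => -1 * Rh t) (fun t => h * h * Kf t)); auto. intros t Ht. specialize (Hb t Ht). revert Hb. unfold Rabs; destruct Rcase_abs; lra.
    apply IGe_scal; auto. }
  replace ((Gamma (x + h) - Gamma x) / h - Gamma1 x) with ((Gamma (x+h) + (-1) * Gamma x + (-h) * Gamma1 x) / h) by (field; auto).
  rewrite Rabs_div by auto.
  assert (0 < Rabs h) by (apply Rabs_pos_lt; auto).
  apply Rmult_lt_reg_r with (Rabs h); auto. unfold Rdiv. rewrite Rmult_assoc, Rinv_l, Rmult_1_r by lra.
  assert (Rabs (Gamma (x+h) + (-1) * Gamma x + (-h) * Gamma1 x) <= Rabs h * Rabs h * IK).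
  { rewrite <- Rabs_mult. rewrite (Rabs_right (h*h)) by nra. unfold Rabs at 1. destruct Rcase_abs; lra. }
  apply Rle_lt_trans with (Rabs h * Rabs h * IK); auto.
  assert (Rabs h * IK < eps).
  { apply Rle_lt_trans with (eps / (IK + 1) * IK). apply Rmult_le_compat_r; lra.
    apply Rlt_le_trans with (eps / (IK+1) * (IK + 1)). apply Rmult_lt_compat_l. apply Rdiv_lt_0_compat; lra. lra.
    right; field; lra. }
  nra.
Qed.

Lemma Rpower_succ t c : 0 < t -> Rpower t (c + 1) = Rpower t c * t.
Proof. intros. rewrite Rpower_plus, Rpower_1'; auto. Qed.

Lemma psi_upper x : 1 < x -> Gamma1 x <= ln x * Gamma x.
Proof.
  intros Hx.
  assert (H : IGe (fun t => (ln x - 1) * gi (x-1) t + (1/x) * gi ((x+1)-1) t) ((ln x - 1) * Gamma x + (1/x) * Gamma (x+1))).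
  { apply IGe_plus; apply IGe_scal; apply Gamma_IGe; lra. }
  rewrite Gamma_rec in H by lra.
  replace ((ln x - 1) * Gamma x + 1 / x * (x * Gamma x)) with (ln x * Gamma x) in H by (field; lra).
  apply (IGe_le (gl (x-1)) _ _ _ ) with (2 := Gamma1_IGe x Hx) (3 := H).
  intros t Ht. unfold gl, gi. replace (x + 1 - 1) with ((x - 1) + 1) by ring. rewrite Rpower_succ by auto.
  assert (ln t <= ln x - 1 + t / x).
  { pose proof (ln_le_sub1 (t/x) ltac:(apply Rdiv_lt_0_compat; lra)). rewrite ln_div in H0 by lra. lra. }
  pose proof (Rpower_pos t (x-1)). pose proof (exp_pos (-t)).
  assert (0 < Rpower t (x-1) * exp (-t)) by (apply Rmult_lt_0_compat; auto).
  replace ((ln x - 1) * (Rpower t (x - 1) * exp (- t)) + 1 / x * (Rpower t (x - 1) * t * exp (- t)))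
    with ((Rpower t (x - 1) * exp (- t)) * (ln x - 1 + t / x)) by (field; lra).
  replace (Rpower t (x - 1) * ln t * exp (- t)) with ((Rpower t (x - 1) * exp (- t)) * ln t) by ring.
  apply Rmult_le_compat_l; lra.
Qed.

Lemma psi_lower x : 1 <= x -> ln x * Gamma (x + 1) <= Gamma1 (x + 1).
Proof.
  intros Hx.
  assert (H : IGe (fun t => (ln x + 1) * gi ((x+1)-1) t + (-x) * gi (x-1) t) ((ln x + 1) * Gamma (x+1) + (-x) * Gamma x)).
  { apply IGe_plus; apply IGe_scal; apply Gamma_IGe; lra. }
  rewrite Gamma_rec in H by lra.
  replace ((ln x + 1) * (x * Gamma x) + - x * Gamma x) with (ln x * (x * Gamma x)) in H by ring.
  rewrite Gamma_rec by lra.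
  apply (IGe_le _ (gl (x+1-1)) _ _ ) with (2 := H) (3 := Gamma1_IGe (x+1) ltac:(lra)).
  intros t Ht. unfold gl, gi. replace (x + 1 - 1) with ((x - 1) + 1) by ring. rewrite Rpower_succ by auto.
  assert (ln x + 1 - x / t <= ln t).
  { pose proof (ln_le_sub1 (x/t) ltac:(apply Rdiv_lt_0_compat; lra)). rewrite ln_div in H0 by lra. lra. }
  pose proof (Rpower_pos t (x-1)). pose proof (exp_pos (-t)).
  assert (0 < Rpower t (x-1) * t * exp (-t)) by (apply Rmult_lt_0_compat; auto; apply Rmult_lt_0_compat; auto).
  replace ((ln x + 1) * (Rpower t (x - 1) * t * exp (- t)) + - x * (Rpower t (x - 1) * exp (- t)))
    with ((Rpower t (x - 1) * t * exp (- t)) * (ln x + 1 - x / t)) by (field; lra).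
  replace (Rpower t (x - 1) * t * ln t * exp (- t)) with ((Rpower t (x - 1) * t * exp (- t)) * ln t) by ring.
  apply Rmult_le_compat_l; lra.
Qed.

Lemma exp_pow_INR x m : exp x ^ m = exp (INR m * x).
Proof.
  induction m. simpl. rewrite Rmult_0_l, exp_0. auto.
  rewrite S_INR. simpl. rewrite IHm. rewrite <- exp_plus. f_equal. ring.
Qed.

Lemma exp_convex a x1 x x2 : 0 <= a -> x1 <= x <= x2 ->
  exp (a * x) * (x2 - x1) <= (x2 - x) * exp (a * x1) + (x - x1) * exp (a * x2).
Proof.
  intros Ha Hx.
  assert (E1 : exp (a * x1) >= exp (a * x) * (1 + a * (x1 - x))).
  { replace (a * x1) with (a * x + a * (x1 - x)) by ring. rewrite exp_plus.
    pose proof (exp_ineq1_le (a * (x1 - x))). pose proof (exp_pos (a*x)). nra. }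
  assert (E2 : exp (a * x2) >= exp (a * x) * (1 + a * (x2 - x))).
  { replace (a * x2) with (a * x + a * (x2 - x)) by ring. rewrite exp_plus.
    pose proof (exp_ineq1_le (a * (x2 - x))). pose proof (exp_pos (a*x)). nra. }
  assert (0 <= x2 - x) by lra. assert (0 <= x - x1) by lra.
  apply Rle_trans with ((x2 - x) * (exp (a * x) * (1 + a * (x1 - x))) + (x - x1) * (exp (a * x) * (1 + a * (x2 - x)))).
  right; ring. apply Rplus_le_compat; apply Rmult_le_compat_l; lra.
Qed.

Lemma le_exp_self y : y <= exp y.
Proof. pose proof (exp_ineq1_le y). lra. Qed.

Lemma L_exp_bound c L : 0 < c -> 0 <= L -> L * exp (- (c * L)) <= (2 / c) * exp (- (c * L / 2)).
Proof.
  intros Hc HL. pose proof (le_exp_self (c * L / 2)).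
  assert (L <= (2/c) * exp (c * L / 2)).
  { apply Rmult_le_reg_l with (c/2). lra. replace (c / 2 * (2 / c * exp (c * L / 2))) with (exp (c*L/2)) by (field; lra). lra. }
  replace (exp (- (c * L / 2))) with (exp (c * L / 2) * exp (- (c * L))).
  2: { rewrite <- exp_plus. f_equal. field. }
  pose proof (exp_pos (- (c*L))). rewrite <- Rmult_assoc. apply Rmult_le_compat_r; lra.
Qed.

Lemma L2_exp_bound c L : 0 < c -> 0 <= L -> L * L * exp (- (c * L)) <= (16 / (c * c)) * exp (- (c * L / 2)).
Proof.
  intros Hc HL. pose proof (le_exp_self (c * L / 4)).
  assert (H1 : L <= (4/c) * exp (c * L / 4)).
  { apply Rmult_le_reg_l with (c/4). lra. replace (c / 4 * (4 / c * exp (c * L / 4))) with (exp (c*L/4)) by (field; lra). lra. }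
  assert (H2 : L * L <= (4/c) * exp (c * L / 4) * ((4/c) * exp (c * L / 4))).
  { apply Rmult_le_compat; auto. }
  replace ((4/c) * exp (c * L / 4) * ((4/c) * exp (c * L / 4))) with ((16/(c*c)) * exp (c * L / 2)) in H2.
  2: { replace (c * L / 2) with (c*L/4 + c*L/4) by field. rewrite exp_plus. field. lra. }
  replace (exp (- (c * L / 2))) with (exp (c * L / 2) * exp (- (c * L))).
  2: { rewrite <- exp_plus. f_equal. field. }
  pose proof (exp_pos (- (c*L))). rewrite <- Rmult_assoc. apply Rmult_le_compat_r; lra.
Qed.

Lemma exp_small c t : 0 < c -> 0 < t -> forall L, (1/c) * ln (1/t) < L -> exp (- (c * L)) < t.
Proof.
  intros Hc Ht L HL. rewrite <- (exp_ln t) by auto. apply exp_increasing.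
  rewrite ln_div in HL by lra. rewrite ln_1 in HL.
  apply Rmult_lt_compat_l with (r := c) in HL; auto. replace (c * (1/c * (0 - ln t))) with (- ln t) in HL by (field; lra). lra.
Qed.

Lemma ln_1p_lower u : 0 <= u -> u / (1 + u) <= ln (1 + u).
Proof.
  intros Hu. pose proof (ln_le_sub1 (1/(1+u)) ltac:(apply Rdiv_lt_0_compat; lra)).
  rewrite ln_div, ln_1 in H by lra. replace (1/(1+u) - 1) with (- (u/(1+u))) in H by (field; lra). lra.
Qed.

Lemma exp_ge1 y : 0 <= y -> 1 <= exp y.
Proof. intros. pose proof (exp_ineq1_le y). lra. Qed.
Lemma exp_le1 y : y <= 0 -> exp y <= 1.
Proof. intros. rewrite <- exp_0. apply exp_le; auto. Qed.

Definition fd (k : nat) (p D s : R) : R := p / (1 - p) * (INR k * s ^ (k - 1) / (1 - / D ^ k)).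

Lemma asym (k : nat) (alpha r p lambda eta2 mu : R)
  (Hk : (2 <= k)%nat) (Halpha : 0 < alpha) (Hr : 0 < r)
  (Hp0 : 0 < p) (Hp1 : p < 1)
  (H2k : (2 * INR k - 1) * alpha > 1)
  (Hka : INR k * alpha <= 1)
  (Hlambda : 0 < lambda)
  (Heta2 : 0 < eta2) (Heta21 : eta2 < 1)
  (Hmu1 : alpha0 k alpha / alpha - mu * eta2 ^ (k - 1) > 0)
  (Hmu2 : mu > INR k * p * r / (1 - p)) :
  exists T, forall N, 1 < N -> T < ln N ->
  forall z, N * (1 / Rpower N alpha + lambda / (Rpower N (1 - (INR k - 1) * alpha) * ln (Rpower N alpha))) < z
     -> z < N * eta2 ->
   1 <= z /\ z < N /\ 1 <= f k p (Rpower N alpha) (z / N) /\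
   ln (N - z + 1) - ln z + ln (1 / Rpower N alpha) - ln (1 - 1 / Rpower N alpha)
     + r * (N * ln (Rpower N alpha)) * (fd k p (Rpower N alpha) (z / N) / N) / f k p (Rpower N alpha) (z / N) < 0.
Proof.
  set (m := (k - 1)%nat).
  assert (Hm : INR m = INR k - 1) by (unfold m; rewrite minus_INR by lia; simpl; ring).
  assert (Hk2 : 2 <= INR k) by (apply (le_INR 2 k) in Hk; simpl in Hk; lra).
  assert (Ha2 : alpha <= 1/2) by nra.
  set (beta := (2 * INR k - 1) * alpha - 1). assert (Hbeta : 0 < beta) by (unfold beta; lra).
  set (mu' := INR k * p * r / (1 - p)).
  assert (Hmu' : 0 < mu') by (unfold mu'; apply Rdiv_lt_0_compat; [apply Rmult_lt_0_compat; [nra|lra] | lra]).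
  assert (Hmu : 0 < mu) by (unfold mu' in Hmu'; lra).
  set (rho := 1 - mu' / mu).
  assert (Hmu2' : mu > mu') by (unfold mu'; lra).
  assert (Hrho : 0 < rho). { unfold rho. assert (mu'/mu < 1). { apply Rmult_lt_reg_r with mu; auto. unfold Rdiv. rewrite Rmult_assoc, Rinv_l by lra. lra. } lra. }
  set (K2 := 2 ^ m). assert (HK2 : 0 < K2) by (apply pow_lt; lra).
  assert (Hc2 : mu * eta2 ^ m < 1/2).
  { assert (alpha0 k alpha / alpha <= 1/2).
    { assert (Hq : (2 * INR k - 1) * alpha - 1 <= alpha / 2 * (2 * (INR k - 1))) by nra.
      unfold alpha0. replace (((2 * INR k - 1) * alpha - 1) / (2 * (INR k - 1)) / alpha)
        with (((2 * INR k - 1) * alpha - 1) / (alpha * (2 * (INR k - 1)))) by (field; lra).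
      apply Rmult_le_reg_r with (alpha * (2 * (INR k - 1))). nra.
      unfold Rdiv. rewrite Rmult_assoc, Rinv_l by nra. lra. }
    unfold m. lra. }
  assert (Heta2m : 0 < eta2 ^ m) by (apply pow_lt; auto).
  set (t5 := lambda * INR k / 16). assert (Ht5 : 0 < t5) by (unfold t5; nra).
  set (t6 := lambda * (beta * beta) / (64 * mu * (alpha * alpha) * K2)).
  assert (Ht6 : 0 < t6). { unfold t6. assert (0 < beta*beta) by (apply Rmult_lt_0_compat; lra). assert (0 < alpha*alpha) by (apply Rmult_lt_0_compat; lra).
    apply Rdiv_lt_0_compat. apply Rmult_lt_0_compat; lra. repeat apply Rmult_lt_0_compat; lra. }
  set (T := Rmax (Rmax (Rmax 1 (2 / alpha)) (Rmax (2 * (2 - ln eta2) / alpha) (lambda / alpha + 1)))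
               (Rmax (Rmax (1 / (alpha * rho)) ((1 / (INR k * alpha / 2)) * ln (1 / t5)))
                     ((1 / (beta / 2)) * ln (1 / t6)))).
  exists T. intros N HN HT z Hz1 Hz2.
  set (L := ln N) in *.
  assert (Hmaxl : forall a b c, a <= b -> a <= Rmax b c) by (intros; eapply Rle_trans; [eauto|apply Rmax_l]).
  assert (Hmaxr : forall a b c, a <= c -> a <= Rmax b c) by (intros; eapply Rle_trans; [eauto|apply Rmax_r]).
  assert (HL1 : 1 < L) by (eapply Rle_lt_trans; [|exact HT]; unfold T; do 3 apply Hmaxl; lra).
  assert (HL2 : 2 / alpha < L) by (eapply Rle_lt_trans; [|exact HT]; unfold T; do 2 apply Hmaxl; apply Hmaxr; lra).
  assert (HL3 : 2 * (2 - ln eta2) / alpha < L) by (eapply Rle_lt_trans; [|exact HT]; unfold T; apply Hmaxl; apply Hmaxr; apply Hmaxl; lra).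
  assert (HL4 : lambda / alpha + 1 < L) by (eapply Rle_lt_trans; [|exact HT]; unfold T; apply Hmaxl; apply Hmaxr; apply Hmaxr; lra).
  assert (HL5 : 1 / (alpha * rho) < L) by (eapply Rle_lt_trans; [|exact HT]; unfold T; apply Hmaxr; do 2 apply Hmaxl; lra).
  assert (HL6 : (1 / (INR k * alpha / 2)) * ln (1 / t5) < L) by (eapply Rle_lt_trans; [|exact HT]; unfold T; apply Hmaxr; apply Hmaxl; apply Hmaxr; lra).
  assert (HL7 : (1 / (beta / 2)) * ln (1 / t6) < L) by (eapply Rle_lt_trans; [|exact HT]; unfold T; apply Hmaxr; apply Hmaxr; lra).
  clear HT Hmaxl Hmaxr.

  assert (HNL : N = exp L) by (unfold L; rewrite exp_ln; lra).
  set (D := Rpower N alpha).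
  assert (HD : D = exp (alpha * L)) by reflexivity.
  assert (HlnD : ln D = alpha * L) by (rewrite HD; apply ln_exp).
  assert (HaL : 2 < alpha * L). { apply Rmult_lt_compat_l with (r := alpha) in HL2; auto. replace (alpha * (2/alpha)) with 2 in HL2 by (field; lra). lra. }
  assert (HD2 : 2 < D). { rewrite HD. pose proof (exp_ineq1_le (alpha * L)). lra. }
  set (P := Rpower N (1 - (INR k - 1) * alpha)).
  assert (HP : P = exp ((1 - (INR k - 1) * alpha) * L)) by reflexivity.
  set (u := D * (lambda / (P * ln D))).
  assert (Hu : u = lambda * exp ((INR k * alpha - 1) * L) / (alpha * L)).
  { unfold u. rewrite HlnD. rewrite HD, HP.
    replace (exp ((INR k * alpha - 1) * L)) with (exp (alpha * L) / exp ((1 - (INR k - 1) * alpha) * L)).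
    field. repeat split; first [apply Rgt_not_eq, exp_pos | lra].
    unfold Rdiv. rewrite <- exp_Ropp, <- exp_plus. f_equal. ring. }
  assert (Hexpk : 0 < exp ((INR k * alpha - 1) * L) <= 1).
  { split. apply exp_pos. apply exp_le1. assert (INR k * alpha - 1 <= 0) by lra. assert (0 <= L) by lra. nra. }
  assert (Hu0 : 0 < u). { rewrite Hu. apply Rdiv_lt_0_compat. nra. lra. }
  assert (Hu1 : u <= 1).
  { rewrite Hu. apply Rmult_le_reg_r with (alpha * L). lra. unfold Rdiv. rewrite Rmult_assoc, Rinv_l, Rmult_1_r by lra.
    assert (lambda < alpha * L). { apply Rmult_lt_compat_l with (r := alpha) in HL4; auto. replace (alpha * (lambda / alpha + 1)) with (lambda + alpha) in HL4 by (field; lra). lra. }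
    nra. }
  assert (HP0 : 0 < P) by (rewrite HP; apply exp_pos).
  assert (HlnD0 : 0 < ln D) by (rewrite HlnD; lra).
  set (s := z / N).
  assert (HE1 : 1 / D + lambda / (P * ln D) < s).
  { unfold s. apply Rmult_lt_reg_l with N. lra. replace (N * (z / N)) with z by (field; lra). auto. }
  assert (HsD : 1 + u < s * D).
  { replace (1 + u) with ((1/D + lambda / (P * ln D)) * D) by (unfold u; field; repeat split; first [lra | nra]). apply Rmult_lt_compat_r; lra. }
  assert (Hs2 : s < eta2). { unfold s. apply Rmult_lt_reg_l with N. lra. replace (N * (z / N)) with z by (field; lra). lra. }
  assert (HDs : 1 / D < s). { assert (0 < lambda / (P * ln D)). { apply Rdiv_lt_0_compat; auto. rewrite HP, HlnD. apply Rmult_lt_0_compat. apply exp_pos. lra. } lra. }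
  assert (Hs0 : 0 < s). { assert (0 < 1 / D) by (apply Rdiv_lt_0_compat; lra). lra. }
  assert (Hz : z = s * N) by (unfold s; field; lra).
  assert (Hzge1 : 1 <= z).
  { rewrite Hz. apply Rle_trans with (1 / D * N). 2: apply Rmult_le_compat_r; lra.
    rewrite HD, HNL. replace (1 / exp (alpha * L) * exp L) with (exp ((1 - alpha) * L)).
    apply exp_ge1. nra.
    replace ((1 - alpha) * L) with (L + - (alpha * L)) by ring. rewrite exp_plus, exp_Ropp. field. apply Rgt_not_eq, exp_pos. }
  assert (HzN : z < N). { rewrite Hz. nra. }
  assert (HDk : 0 < / D ^ k <= / D).
  { split. apply Rinv_0_lt_compat, pow_lt; lra. apply Rinv_le_contravar. lra.
    replace k with (S (k - 1)) at 1 by lia. simpl. assert (1 <= D ^ (k-1)) by (apply pow_R1_Rle; lra). nra. }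
  assert (HinvD : / D < 1 / 2) by (replace (1/2) with (/2) by field; apply Rinv_lt_contravar; lra).
  assert (HsDk : / D ^ k <= s ^ k).
  { rewrite <- pow_inv. apply pow_incr. split. left; apply Rinv_0_lt_compat; lra. replace (/ D) with (1/D) by (field; lra). lra. }
  assert (HF : 1 <= f k p D s).
  { unfold f. assert (0 <= (s ^ k - / D ^ k) / (1 - / D ^ k)). { apply Rdiv_le_0_compat; lra. }
    assert (0 < p / (1 - p)) by (apply Rdiv_lt_0_compat; lra). nra. }
  split; [exact Hzge1|]. split; [exact HzN|]. split; [exact HF|].
  fold D. fold s.

  set (x := ln (s * D)). set (x1 := ln (1 + u)). set (x2 := ln (D * eta2)).
  assert (Hx1 : x1 < x) by (apply ln_increasing; lra).
  assert (Hx2 : x < x2) by (apply ln_increasing; nra).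
  assert (HexpX : exp x = s * D) by (apply exp_ln; nra).
  set (Dm := D ^ m). assert (HDm : Dm = exp (INR m * (alpha * L))) by (unfold Dm; rewrite HD; apply exp_pow_INR).
  assert (HDm0 : 0 < Dm) by (rewrite HDm; apply exp_pos).
  set (A := mu * (alpha * L) / Dm). assert (HA : 0 < A) by (unfold A; apply Rdiv_lt_0_compat; nra).
  set (phi := fun y => 2 / N - y + A * exp (INR m * y)).
  assert (Pa : ln (N - z + 1) - ln z + ln (1 / D) - ln (1 - 1 / D) <= 2 / N - x).
  { assert (H1D : 0 < 1 - 1/D). { assert (1/D < 1/2) by (apply Rmult_lt_reg_r with D; [lra | unfold Rdiv; rewrite Rmult_1_l, Rinv_l by lra; lra]). lra. }
    assert (Ex : ln (N - z + 1) - ln z + ln (1 / D) - ln (1 - 1 / D) = ln ((N - z + 1) / (N * (1 - 1/D))) - x).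
    { assert (l1 : ln (1/D) = - ln D) by (rewrite ln_div, ln_1 by lra; ring).
      assert (l2 : ln ((N - z + 1) / (N * (1 - 1/D))) = ln (N - z + 1) - (ln N + ln (1 - 1/D))).
      { rewrite ln_div by nra. rewrite ln_mult by lra. auto. }
      assert (l3 : x = ln z - ln N + ln D). { unfold x, s. rewrite ln_mult, ln_div; try lra. apply Rdiv_lt_0_compat; lra. }
      lra. }
    rewrite Ex. pose proof (ln_le_sub1 ((N - z + 1) / (N * (1 - 1/D))) ltac:(apply Rdiv_lt_0_compat; nra)).
    assert ((N - z + 1) / (N * (1 - 1/D)) <= 1 + 2 / N).
    { apply Rmult_le_reg_r with (N * (1 - 1/D)). nra. unfold Rdiv at 1. rewrite Rmult_assoc, Rinv_l, Rmult_1_r by nra.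
      assert (N / D <= z). { rewrite Hz. unfold Rdiv. apply Rmult_le_compat_r || idtac. nra. }
      assert (2 / D < 1) by (apply Rmult_lt_reg_r with D; [lra | unfold Rdiv; rewrite Rmult_assoc, Rinv_l by lra; lra]).
      replace ((1 + 2 / N) * (N * (1 - 1 / D))) with (N + 2 - N / D - 2 / D) by (field; lra). lra. }
    lra. }
  assert (Pb : r * (N * ln D) * (fd k p D s / N) / f k p D s <= A * exp (INR m * x)).
  { assert (HsM : 0 < s ^ m) by (apply pow_lt; lra).
    assert (E1 : r * (N * ln D) * (fd k p D s / N) = ln D * mu' * s ^ m / (1 - / D ^ k)).
    { assert (1 < D ^ k). { replace k with (S (k-1)) by lia. simpl. assert (1 <= D ^ (k-1)) by (apply pow_R1_Rle; lra). nra. }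
      unfold fd, mu', m. field. repeat split; try lra. }
    assert (Hrho2 : / D ^ k < rho).
    { apply Rle_lt_trans with (/ D). apply HDk. rewrite HD, <- exp_Ropp.
      assert (exp (- (alpha * L)) * (1 + alpha * L) <= 1).
      { pose proof (exp_ineq1_le (alpha * L)). assert (exp (- (alpha*L)) * exp (alpha * L) = 1) by (rewrite <- exp_plus; replace (- (alpha * L) + alpha * L) with 0 by ring; apply exp_0).
        pose proof (exp_pos (- (alpha * L))). nra. }
      assert (1 < alpha * rho * L). { apply Rmult_lt_compat_l with (r := alpha * rho) in HL5. replace (alpha * rho * (1 / (alpha * rho))) with 1 in HL5 by (field; lra). lra. nra. }
      pose proof (exp_pos (- (alpha * L))). nra. }
    assert (E2 : ln D * mu' * s ^ m / (1 - / D ^ k) <= mu * (alpha * L) * s ^ m).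
    { rewrite HlnD. apply Rmult_le_reg_r with (1 - / D ^ k). lra. unfold Rdiv. rewrite Rmult_assoc, Rinv_l, Rmult_1_r by lra.
      assert (mu' <= mu * (1 - / D ^ k)). { unfold rho in Hrho2. apply Rle_trans with (mu * (mu'/mu)). right; field; lra. apply Rmult_le_compat_l; lra. }
      assert (0 < alpha * L * s ^ m) by (repeat apply Rmult_lt_0_compat; lra).
      apply Rle_trans with ((alpha*L*s^m) * mu'). right; ring. apply Rle_trans with ((alpha*L*s^m) * (mu * (1 - /D^k))). apply Rmult_le_compat_l; lra. right; ring. }
    assert (E3 : mu * (alpha * L) * s ^ m = A * exp (INR m * x)).
    { unfold A. rewrite <- exp_pow_INR, HexpX. unfold Dm. rewrite Rpow_mult_distr. field. apply pow_nonzero. lra. }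
    rewrite E1. apply Rle_trans with (ln D * mu' * s ^ m / (1 - / D ^ k)).
    { assert (0 <= ln D * mu' * s ^ m / (1 - / D ^ k)). { apply Rdiv_le_0_compat. left. apply Rmult_lt_0_compat. apply Rmult_lt_0_compat. exact HlnD0. exact Hmu'. exact HsM. lra. }
      apply Rmult_le_reg_r with (f k p D s). lra. unfold Rdiv at 1. rewrite Rmult_assoc, Rinv_l, Rmult_1_r by lra. nra. }
    lra. }
  assert (Hphi : ln (N - z + 1) - ln z + ln (1 / D) - ln (1 - 1 / D) + r * (N * ln D) * (fd k p D s / N) / f k p D s <= phi x)
    by (unfold phi; lra).

  assert (HN2 : 2 / N = 2 * exp (- L)) by (rewrite HNL, exp_Ropp; field; apply Rgt_not_eq, exp_pos).
  set (e1 := exp ((INR k * alpha - 1) * L)) in *.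
  assert (Hka0 : 0 < INR k * alpha) by (apply Rmult_lt_0_compat; lra).
  assert (Haa : 0 < alpha * alpha) by (apply Rmult_lt_0_compat; lra).
  assert (Hbb : 0 < beta * beta) by (apply Rmult_lt_0_compat; lra).
  assert (Phi1 : phi x1 < 0).
  { unfold phi.
    assert (Ex1 : exp (INR m * x1) = (1 + u) ^ m) by (rewrite <- exp_pow_INR; unfold x1; rewrite exp_ln; lra).
    assert (Hpw : (1 + u) ^ m <= K2) by (unfold K2; apply pow_incr; lra).
    assert (Hx1l : u / 2 <= x1).
    { apply Rle_trans with (u / (1 + u)). apply Rmult_le_reg_r with (2 * (1 + u)). lra.
      replace (u / 2 * (2 * (1 + u))) with (u * (1 + u)) by field. replace (u / (1 + u) * (2 * (1 + u))) with (2 * u) by (field; repeat split; lra).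
      assert (u*u <= u*1) by (apply Rmult_le_compat_l; lra). lra.
      apply ln_1p_lower; lra. }
    assert (C1 : 2 * exp (- L) < u / 4).
    { assert (EL : exp (- L) = e1 * exp (- (INR k * alpha * L))) by (unfold e1; rewrite <- exp_plus; f_equal; ring).
      pose proof (L_exp_bound (INR k * alpha) L ltac:(lra) ltac:(lra)) as B1.
      pose proof (exp_small (INR k * alpha / 2) t5 ltac:(lra) Ht5 L HL6) as B2.
      replace (- (INR k * alpha / 2 * L)) with (- (INR k * alpha * L / 2)) in B2 by field.
      assert (B3 : 8 * (alpha * L) * exp (- (INR k * alpha * L)) < lambda).
      { apply Rle_lt_trans with (8 * alpha * (2 / (INR k * alpha) * exp (- (INR k * alpha * L / 2)))).
        replace (8 * (alpha * L) * exp (- (INR k * alpha * L))) with (8 * alpha * (L * exp (- (INR k * alpha * L)))) by ring.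
        apply Rmult_le_compat_l; lra.
        apply Rlt_le_trans with (8 * alpha * (2 / (INR k * alpha) * t5)).
        apply Rmult_lt_compat_l. lra. apply Rmult_lt_compat_l. apply Rdiv_lt_0_compat; lra. auto.
        right. unfold t5. field. lra. }
      rewrite Hu, EL. assert (0 < e1) by (unfold e1; apply exp_pos).
      apply Rmult_lt_reg_r with (4 * (alpha * L) / e1). apply Rdiv_lt_0_compat; lra.
      replace (2 * (e1 * exp (- (INR k * alpha * L))) * (4 * (alpha * L) / e1)) with (8 * (alpha * L) * exp (- (INR k * alpha * L))) by (field; repeat split; lra).
      replace (lambda * e1 / (alpha * L) / 4 * (4 * (alpha * L) / e1)) with lambda by (field; repeat split; lra). auto. }
    assert (C2 : A * K2 < u / 4).
    { assert (EA : A = mu * (alpha * L) * (e1 * exp (- (beta * L)))).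
      { unfold A. rewrite HDm. unfold e1, beta. rewrite <- exp_plus. rewrite Hm.
        replace (exp ((INR k * alpha - 1) * L + - (((2 * INR k - 1) * alpha - 1) * L))) with (/ exp ((INR k - 1) * (alpha * L))).
        field. apply Rgt_not_eq, exp_pos. rewrite <- exp_Ropp. f_equal. ring. }
      pose proof (L2_exp_bound beta L Hbeta ltac:(lra)) as B1.
      pose proof (exp_small (beta / 2) t6 ltac:(lra) Ht6 L HL7) as B2.
      replace (- (beta / 2 * L)) with (- (beta * L / 2)) in B2 by field.
      assert (B3 : 4 * mu * (alpha * alpha) * K2 * (L * L * exp (- (beta * L))) < lambda).
      { assert (0 < 4 * mu * (alpha * alpha) * K2). { repeat apply Rmult_lt_0_compat; lra. }
        apply Rle_lt_trans with (4 * mu * (alpha * alpha) * K2 * (16 / (beta * beta) * exp (- (beta * L / 2)))).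
        apply Rmult_le_compat_l; lra.
        apply Rlt_le_trans with (4 * mu * (alpha * alpha) * K2 * (16 / (beta * beta) * t6)).
        apply Rmult_lt_compat_l. auto. apply Rmult_lt_compat_l. apply Rdiv_lt_0_compat; lra. auto.
        right. unfold t6. field. repeat split; lra. }
      rewrite Hu, EA. assert (0 < e1) by (unfold e1; apply exp_pos).
      apply Rmult_lt_reg_r with (4 * (alpha * L) / e1). apply Rdiv_lt_0_compat; lra.
      replace (mu * (alpha * L) * (e1 * exp (- (beta * L))) * K2 * (4 * (alpha * L) / e1)) with (4 * mu * (alpha * alpha) * K2 * (L * L * exp (- (beta * L)))) by (field; repeat split; lra).
      replace (lambda * e1 / (alpha * L) / 4 * (4 * (alpha * L) / e1)) with lambda by (field; repeat split; lra). auto. }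
    rewrite Ex1, HN2.
    assert (A * (1 + u) ^ m <= A * K2) by (apply Rmult_le_compat_l; lra).
    lra. }
  assert (Phi2 : phi x2 < 0).
  { unfold phi.
    assert (Ex2 : exp (INR m * x2) = Dm * eta2 ^ m).
    { rewrite <- exp_pow_INR. unfold x2. rewrite exp_ln by (apply Rmult_lt_0_compat; lra). unfold Dm. apply Rpow_mult_distr. }
    assert (Hx2v : x2 = alpha * L + ln eta2) by (unfold x2; rewrite ln_mult by lra; rewrite HlnD; auto).
    rewrite Ex2, Hx2v. unfold A.
    replace (mu * (alpha * L) / Dm * (Dm * eta2 ^ m)) with ((alpha * L) * (mu * eta2 ^ m)) by (field; repeat split; lra).
    assert ((alpha * L) * (mu * eta2 ^ m) <= (alpha * L) * (1/2)) by (apply Rmult_le_compat_l; lra).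
    assert (2 / N < 2). { apply Rmult_lt_reg_r with N. lra. unfold Rdiv. rewrite Rmult_assoc, Rinv_l by lra. lra. }
    assert (2 * (2 - ln eta2) < alpha * L).
    { apply Rmult_lt_compat_l with (r := alpha) in HL3; auto. replace (alpha * (2 * (2 - ln eta2) / alpha)) with (2 * (2 - ln eta2)) in HL3 by (field; repeat split; lra). lra. }
    lra. }
  assert (Hconv := exp_convex (INR m) x1 x x2 (pos_INR m) ltac:(lra)).
  assert (Phix : phi x < 0).
  { unfold phi in *.
    assert (Hw : (2 / N - x + A * exp (INR m * x)) * (x2 - x1) <= (x2 - x) * (2 / N - x1 + A * exp (INR m * x1)) + (x - x1) * (2 / N - x2 + A * exp (INR m * x2))).
    { assert (A * (exp (INR m * x) * (x2 - x1)) <= A * ((x2 - x) * exp (INR m * x1) + (x - x1) * exp (INR m * x2))) by (apply Rmult_le_compat_l; lra).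
      lra. }
    assert ((x2 - x) * (2 / N - x1 + A * exp (INR m * x1)) < 0) by (apply Rmult_pos_neg; lra) || idtac.
    assert (0 < x2 - x) by lra. assert (0 < x - x1) by lra.
    assert ((x2 - x) * (2 / N - x1 + A * exp (INR m * x1)) < 0). { apply Rmult_lt_reg_l with (/ (x2 - x)). apply Rinv_0_lt_compat; lra. rewrite <- Rmult_assoc, Rinv_l, Rmult_1_l, Rmult_0_r by lra. lra. }
    assert ((x - x1) * (2 / N - x2 + A * exp (INR m * x2)) < 0). { apply Rmult_lt_reg_l with (/ (x - x1)). apply Rinv_0_lt_compat; lra. rewrite <- Rmult_assoc, Rinv_l, Rmult_1_l, Rmult_0_r by lra. lra. }
    assert ((2 / N - x + A * exp (INR m * x)) * (x2 - x1) < 0) by lra.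
    apply Rmult_lt_reg_r with (x2 - x1). lra. rewrite Rmult_0_l. auto. }
  lra.
Qed.

Lemma is_derive_prod4 (f1 f2 f3 f4 : R -> R) z c1 c2 c3 c4 :
  is_derive f1 z (c1 * f1 z) -> is_derive f2 z (c2 * f2 z) ->
  is_derive f3 z (c3 * f3 z) -> is_derive f4 z (c4 * f4 z) ->
  is_derive (fun t => f1 t * f2 t * f3 t * f4 t) z ((c1 + c2 + c3 + c4) * (f1 z * f2 z * f3 z * f4 z)).
Proof.
  intros H1 H2 H3 H4.
  pose proof (is_derive_mult f1 f2 z _ _ H1 H2 ltac:(intros; apply Rmult_comm)) as H12.
  pose proof (is_derive_mult _ f3 z _ _ H12 H3 ltac:(intros; apply Rmult_comm)) as H123.
  pose proof (is_derive_mult _ f4 z _ _ H123 H4 ltac:(intros; apply Rmult_comm)) as H1234.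
  match type of H1234 with is_derive _ _ ?l =>
    replace ((c1 + c2 + c3 + c4) * (f1 z * f2 z * f3 z * f4 z)) with l; [exact H1234|] end.
  unfold plus, mult; simpl. ring.
Qed.

Lemma d_u1 N z : 0 < z -> z < N ->
  is_derive (fun t => Gamma (N + 1) / (Gamma (t + 1) * Gamma (N - t + 1))) z
    ((Gamma1 (N - z + 1) / Gamma (N - z + 1) - Gamma1 (z + 1) / Gamma (z + 1)) *
     (Gamma (N + 1) / (Gamma (z + 1) * Gamma (N - z + 1)))).
Proof.
  intros Hz HzN.
  assert (G1 : is_derive (fun t => Gamma (t + 1)) z (Gamma1 (z + 1))).
  { pose proof (is_derive_comp Gamma (fun t => t + 1) z (Gamma1 (z+1)) 1 (Gamma_derive (z+1) ltac:(lra))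
      ltac:(auto_derive; auto; ring)) as HH.
    simpl in HH. unfold scal in HH; simpl in HH; unfold mult in HH; simpl in HH. rewrite Rmult_1_l in HH. exact HH. }
  assert (G2 : is_derive (fun t => Gamma (N - t + 1)) z (- Gamma1 (N - z + 1))).
  { pose proof (is_derive_comp Gamma (fun t => N - t + 1) z (Gamma1 (N - z + 1)) (-1) (Gamma_derive (N - z + 1) ltac:(lra))
      ltac:(auto_derive; auto; ring)) as HH.
    simpl in HH. unfold scal in HH; simpl in HH; unfold mult in HH; simpl in HH.
    replace (- Gamma1 (N - z + 1)) with (-1 * Gamma1 (N - z + 1)) by ring. exact HH. }
  pose proof (is_derive_mult _ _ z _ _ G1 G2 ltac:(intros; apply Rmult_comm)) as G12.
  simpl in G12.
  pose proof (Gamma_pos (z+1) ltac:(lra)). pose proof (Gamma_pos (N - z + 1) ltac:(lra)).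
  pose proof (is_derive_div (fun _ => Gamma (N + 1)) (fun t => Gamma (t + 1) * Gamma (N - t + 1)) z 0 _
     (is_derive_const _ _) G12 ltac:(apply Rgt_not_eq; apply Rmult_lt_0_compat; lra)) as HH.
  match type of HH with is_derive _ _ ?l => replace (_ * _) with l; [exact HH|] end.
  unfold plus, mult; simpl. field. lra.
Qed.

Lemma d_rpow_const b z : 0 < b -> is_derive (fun t => Rpower b t) z (ln b * Rpower b z).
Proof. intros. unfold Rpower. auto_derive. all: try exact I. all: ring. Qed.

Lemma d_rpow_const2 b N z : 0 < b -> is_derive (fun t => Rpower b (N - t)) z (- ln b * Rpower b (N - z)).
Proof. intros. unfold Rpower. auto_derive. all: try exact I. all: unfold Rminus; ring_simplify; auto. Qed.

Lemma d_f k p D s : p < 1 -> 1 < D -> (1 <= k)%nat -> is_derive (fun s => f k p D s) s (fd k p D s).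
Proof.
  intros Hp HD Hk. assert (1 < D ^ k). { replace k with (S (k-1)) by lia. simpl. assert (1 <= D ^ (k-1)) by (apply pow_R1_Rle; lra). nra. }
  assert (/ D ^ k < 1). { rewrite <- Rinv_1. apply Rinv_lt_contravar; lra. }
  unfold f, fd. auto_derive. lra. replace (Init.Nat.pred k) with (k-1)%nat by lia. field. repeat split; try lra. all: try (apply pow_nonzero; lra).
Qed.

Lemma d_u4 k p D N E z : p < 1 -> 1 < D -> (1 <= k)%nat -> 0 < N -> 0 < f k p D (z / N) ->
  is_derive (fun t => Rpower (f k p D (t / N)) E) z
    ((E * (fd k p D (z / N) / N) / f k p D (z / N)) * Rpower (f k p D (z / N)) E).
Proof.
  intros Hp HD Hk HN Hf.
  assert (HF : is_derive (fun t => f k p D (t / N)) z (fd k p D (z/N) / N)).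
  { pose proof (is_derive_comp (fun s => f k p D s) (fun t => t / N) z (fd k p D (z/N)) (/ N) (d_f k p D (z/N) Hp HD Hk)
      ltac:(auto_derive; [exact I| field; lra])) as HH.
    unfold scal in HH; simpl in HH; unfold mult in HH; simpl in HH.
    replace (fd k p D (z / N) / N) with (/ N * fd k p D (z / N)) by (field; lra). exact HH. }
  assert (HL : is_derive (fun t => ln (f k p D (t / N))) z ((fd k p D (z/N) / N) * / f k p D (z / N))).
  { pose proof (is_derive_comp ln (fun t => f k p D (t / N)) z (/ f k p D (z/N)) _
      ltac:(apply is_derive_Reals; apply derivable_pt_lim_ln; auto) HF) as HH.
    unfold scal in HH; simpl in HH; unfold mult in HH; simpl in HH. exact HH. }
  assert (HE : is_derive (fun t => E * ln (f k p D (t / N))) z (E * ((fd k p D (z/N) / N) * / f k p D (z / N)))).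
  { exact (is_derive_scal _ z E _ HL). }
  pose proof (is_derive_comp exp (fun t => E * ln (f k p D (t / N))) z (exp (E * ln (f k p D (z / N)))) _
      ltac:(apply is_derive_Reals; apply derivable_pt_lim_exp) HE) as HH.
  unfold scal in HH; simpl in HH; unfold mult in HH; simpl in HH.
  unfold Rpower. replace (E * (fd k p D (z / N) / N) / f k p D (z / N) * exp (E * ln (f k p D (z / N))))
    with (E * (fd k p D (z / N) / N * / f k p D (z / N)) * exp (E * ln (f k p D (z / N)))) by (field; lra).
  exact HH.
Qed.

Theorem lemma4p4
  (k : nat) (alpha r p lambda eta2 eta3 mu : R)
  (Hk : (2 <= k)%nat) (Halpha : 0 < alpha) (Hr : 0 < r)
  (Hp0 : 0 < p) (Hp1 : p < 1)
  (H2k : (2 * INR k - 1) * alpha > 1)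
  (Hka : INR k * alpha <= 1)
  (Hktau : INR k >= tau p * ln (tau p) / (tau p - 1))
  (Hrcr : r < r_cr p)
  (Hlambda : 0 < lambda)
  (Heta2 : 0 < eta2) (Heta23 : eta2 < eta3) (Heta3 : eta3 < 1)
  (Hmu1 : alpha0 k alpha / alpha - mu * eta2 ^ (k - 1) > 0)
  (Hmu2 : mu > INR k * p * r / (1 - p))
  (Heta3r : r * ln (1 - p) + eta3 > 0) :
  (forall (n w : nat), (2 <= n)%nat -> (1 <= w <= n)%nat ->
     Phi_c k alpha r p n (INR w) = Phi k alpha r p n w)
  /\
  (exists N : nat, forall n : nat, (N <= n)%nat ->
     forall z : R, INR n * eta1 k alpha lambda n < z < INR n * eta2 ->
       exists l : R, is_derive (Phi_c k alpha r p n) z l /\ l < 0).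
Proof.
  split. { apply part1; auto. }
  destruct (asym k alpha r p lambda eta2 mu Hk Halpha Hr Hp0 Hp1 H2k Hka Hlambda Heta2 ltac:(lra) Hmu1 Hmu2) as [T HT].
  destruct (INR_unbounded (Rmax (exp T) 2)) as [N0 HN0].
  exists N0. intros n Hn z [Hz1 Hz2].
  assert (HINR : INR N0 <= INR n) by (apply le_INR; auto).
  pose proof (Rmax_l (exp T) 2). pose proof (Rmax_r (exp T) 2).
  assert (HN1 : 1 < INR n) by lra.
  assert (HTN : T < ln (INR n)). { rewrite <- (ln_exp T). apply ln_increasing. apply exp_pos. lra. }
  assert (Hn2 : (2 <= n)%nat). { destruct n as [|[|n]]; simpl in *; try lra; try lia. }
  unfold eta1, dd in Hz1.
  destruct (HT (INR n) HN1 HTN z Hz1 Hz2) as [Hzge1 [HzN [HF Hneg]]].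
  pose proof (dd_gt1 alpha n Halpha Hn2) as HD. unfold dd in HD.
  set (N := INR n) in *. set (D := Rpower N alpha) in *.
  set (c1 := Gamma1 (N - z + 1) / Gamma (N - z + 1) - Gamma1 (z + 1) / Gamma (z + 1)).
  set (c2 := ln (1 / D)). set (c3 := - ln (1 - 1 / D)).
  set (E := r * mm alpha n).
  set (c4 := E * (fd k p D (z / N) / N) / f k p D (z / N)).
  assert (H1D : 0 < 1 - 1 / D). { assert (1 / D < 1). { apply Rmult_lt_reg_r with D. lra. unfold Rdiv. rewrite Rmult_1_l, Rinv_l by lra. lra. } lra. }
  assert (Hder : is_derive (Phi_c k alpha r p n) z
     ((c1 + c2 + c3 + c4) * ((Gamma (N + 1) / (Gamma (z + 1) * Gamma (N - z + 1))) * Rpower (1 / D) z * Rpower (1 - 1 / D) (N - z) * Rpower (f k p D (z / N)) E))).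
  { unfold Phi_c, dd. fold N. fold D.
    apply (is_derive_prod4 (fun t => Gamma (N + 1) / (Gamma (t + 1) * Gamma (N - t + 1)))
             (fun t => Rpower (1 / D) t) (fun t => Rpower (1 - 1 / D) (N - t))
             (fun t => Rpower (f k p D (t / N)) (r * mm alpha n))).
    - apply d_u1; lra.
    - apply d_rpow_const. apply Rdiv_lt_0_compat; lra.
    - unfold c3. apply d_rpow_const2. auto.
    - unfold c4, E. apply d_u4; auto; try lra. lia. }
  eexists. split. exact Hder.
  assert (HG1 : 0 < Gamma (z + 1)) by (apply Gamma_pos; lra).
  assert (HG2 : 0 < Gamma (N - z + 1)) by (apply Gamma_pos; lra).
  assert (HG0 : 0 < Gamma (N + 1)) by (apply Gamma_pos; lra).
  assert (Hpos : 0 < Gamma (N + 1) / (Gamma (z + 1) * Gamma (N - z + 1)) * Rpower (1 / D) z * Rpower (1 - 1 / D) (N - z) * Rpower (f k p D (z / N)) E).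
  { assert (0 < Gamma (N + 1) / (Gamma (z + 1) * Gamma (N - z + 1))) by (apply Rdiv_lt_0_compat; auto; apply Rmult_lt_0_compat; auto).
    pose proof (Rpower_pos (1/D) z). pose proof (Rpower_pos (1 - 1/D) (N - z)). pose proof (Rpower_pos (f k p D (z / N)) E).
    apply Rmult_lt_0_compat; [apply Rmult_lt_0_compat; [apply Rmult_lt_0_compat|]|]; auto. }
  assert (Hc1 : c1 <= ln (N - z + 1) - ln z).
  { unfold c1. pose proof (psi_upper (N - z + 1) ltac:(lra)). pose proof (psi_lower z Hzge1).
    assert (Gamma1 (N - z + 1) / Gamma (N - z + 1) <= ln (N - z + 1)).
    { apply Rmult_le_reg_r with (Gamma (N - z + 1)); auto. unfold Rdiv. rewrite Rmult_assoc, Rinv_l, Rmult_1_r by lra. lra. }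
    assert (ln z <= Gamma1 (z + 1) / Gamma (z + 1)).
    { apply Rmult_le_reg_r with (Gamma (z + 1)); auto. unfold Rdiv. rewrite Rmult_assoc, Rinv_l, Rmult_1_r by lra. lra. }
    lra. }
  assert (Hsum : c1 + c2 + c3 + c4 < 0).
  { unfold c2, c3, c4, E. unfold mm, dd. fold N. fold D. lra. }
  apply Rmult_neg_pos; auto.
Qed.
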